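(* If $G$ is a connected locally Ore graph of order $n \ge 4$, then $G$ is $3$-connected.
   Context: A graph $G$ is locally Ore if for every vertex $v \in V(G)$ and every pair $u,w$ of non-adjacent vertices in $N(v)$, $\deg_{\langle N(v)\rangle}(u) + \deg_{\langle N(v)\rangle}(w) \ge \deg_G(v)$, where $N(v)$ is the open neighbourhood of $v$ and $\langle N(v)\rangle$ the subgraph induced by it. *)

(* Defs.v *)
From mathcomp Require Import all_boot.
Set Implicit Arguments. Unset Strict Implicit. Unset Printing Implicit Defensive.

Definition simple_graph (T : finType) (e : rel T) : Prop :=
  symmetric e /\ irreflexive e.

Definition nbhd (T : finType) (e : rel T) (v : T) : {set T} := [set x | e v x].

Definition deg (T : finType) (e : rel T) (v : T) : nat := #|nbhd e v|.

Definition deg_in (T : finType) (e : rel T) (A : {set T}) (u : T) : nat :=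
  #|[set x in A | e u x]|.

Definition locally_ore (T : finType) (e : rel T) : Prop :=
  forall v u w : T, u \in nbhd e v -> w \in nbhd e v -> u != w -> ~~ e u w ->
    deg e v <= deg_in e (nbhd e v) u + deg_in e (nbhd e v) w.

Definition connected_on (T : finType) (e : rel T) (A : {set T}) : Prop :=
  forall x y, x \in A -> y \in A ->
    connect [rel a b | [&& e a b, a \in A & b \in A]] x y.

Definition connected (T : finType) (e : rel T) : Prop := connected_on e setT.

Definition k_connected (k : nat) (T : finType) (e : rel T) : Prop :=
  k < #|T| /\ forall S : {set T}, #|S| < k -> connected_on e (~: S).

(* Main.v *)
Require Import Defs.
From mathcomp Require Import all_boot.
From mathcomp Require Import zify.
Set Implicit Arguments. Unset Strict Implicit. Unset Printing Implicit Defensive.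

Lemma connect_pred (T : finType) (R : rel T) (P : pred T) x y :
  P x -> (forall a b, R a b -> P a -> P b) -> connect R x y -> P y.
Proof.
move=> Px H /connectP [p pth ->]; elim: p x Px pth => [|z p IH] x Px //=.
by move=> /andP [Rxz pth]; apply: IH (H _ _ Rxz Px) pth.
Qed.

Lemma pick_avoid (T : finType) (A B : {set T}) :
  #|B| < #|A| -> exists x, (x \in A) && (x \notin B).
Proof.
move=> H; have : ~~ (A \subset B).
  by apply/negP => /subset_leq_card; rewrite leqNgt H.
by case/subsetPn => x xA xB; exists x; rewrite xA xB.
Qed.

Lemma deg_in_le (T : finType) (e : rel T) (A : {set T}) u w :
  irreflexive e -> u \in A -> w \in A -> u != w -> ~~ e u w ->
  (deg_in e A u).+2 <= #|A|.
Proof.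
move=> irr uA wA uw euw.
have sub : [set x in A | e u x] \subset A :\ u :\ w.
  apply/subsetP => x; rewrite !inE => /andP [xA eux].
  rewrite xA andbT; apply/andP; split.
    by apply: contraNneq euw => <-.
  by apply: contraTneq eux => ->; rewrite irr.
have := subset_leq_card sub.
rewrite /deg_in.
have := cardsD1 u A; rewrite uA.
have := cardsD1 w (A :\ u); rewrite !inE wA eq_sym uw /=.
lia.
Qed.

Lemma closure_edge (T : finType) (e : rel T) (A : {set T}) a0 b0 :
  connected e -> a0 \in A -> b0 \notin A ->
  exists a b, [&& a \in A, b \notin A & e a b].
Proof.
move=> conn aA bA.
case: (boolP [exists a, exists b, [&& a \in A, b \notin A & e a b]]).
  by case/existsP => a /existsP [b H]; exists a, b.
rewrite negb_exists => /forallP H.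
have := conn a0 b0 (in_setT _) (in_setT _).
move/(connect_pred (P := fun x => x \in A)) => /(_ aA).
suff : forall a b, [rel a b | [&& e a b, a \in setT & b \in setT]] a b -> a \in A -> b \in A.
  by move=> K /(_ K); rewrite (negbTE bA).
move=> a b /= /andP [eab _] aA'.
move: (H a); rewrite negb_exists => /forallP /(_ b).
by rewrite aA' eab /= andbT negbK.
Qed.

Lemma deg2 (T : finType) (e : rel T) :
  simple_graph e -> connected e -> 4 <= #|T| -> locally_ore e ->
  forall s t, e s t -> exists y, e s y && (y != t).
Proof.
move=> [sym irr] conn n4 ore s t est.
case: (boolP [exists y, e s y && (y != t)]); first by case/existsP => y H; exists y.
rewrite negb_exists => /forallP H.
have Hs : forall y, e s y -> y = t.
  by move=> y esy; move: (H y); rewrite esy /= negbK => /eqP.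
have [b0 /andP [_ b0A]] : exists b, (b \in [set: T]) && (b \notin [set s; t]).
  apply: pick_avoid; rewrite cardsT.
  have : #|[set s; t]| <= 2 by rewrite cards2; case: (s != t).
  lia.
have sA : s \in [set s; t] by rewrite !inE eqxx.
have [a [b /and3P [aA bA eab]]] := closure_edge conn sA b0A.
move: aA bA; rewrite !inE => /orP [/eqP ? | /eqP ?]; subst a; move=> /norP [bs bt].
  by move: (Hs _ eab) bt => ->; rewrite eqxx.
have sN : s \in nbhd e t by rewrite inE sym.
have bN : b \in nbhd e t by rewrite inE.
have nesb : ~~ e s b by apply/negP => /Hs eb; move: bt; rewrite eb eqxx.
have sb : s != b by rewrite eq_sym.
have := ore t s b sN bN sb nesb.
have nebs : ~~ e b s by rewrite sym.
have bs' : b != s by rewrite eq_sym.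
move=> H2; have H1 := deg_in_le irr bN sN bs' nebs.
have : 0 < deg_in e (nbhd e t) s by rewrite /deg /deg_in in H1 H2 *; lia.
rewrite /deg_in card_gt0 => /set0Pn [y]; rewrite !inE => /andP [ety esy].
by move: (Hs _ esy) ety => ->; rewrite irr.
Qed.

Lemma L1 (T : finType) (e : rel T) (S : {set T}) s u u' :
  simple_graph e -> locally_ore e -> #|S| < 3 -> s \in S ->
  e s u -> e s u' -> u \notin S -> u' \notin S ->
  connect [rel a b | [&& e a b, a \in ~: S & b \in ~: S]] u u'.
Proof.
move=> [sym irr] ore S3 sS esu esu' uS u'S.
have edge : forall a b, e a b -> a \notin S -> b \notin S ->
    connect [rel a b | [&& e a b, a \in ~: S & b \in ~: S]] a b.
  by move=> a b eab aS bS; apply: connect1; rewrite /= !inE eab aS bS.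
case: (eqVneq u u') => [<-|uu']; first exact: connect0.
case: (boolP (e u u')) => [euu'|neuu']; first exact: edge.
have uN : u \in nbhd e s by rewrite inE.
have u'N : u' \in nbhd e s by rewrite inE.
have Ho := ore s u u' uN u'N uu' neuu'.
set X := [set x in nbhd e s | e u x].
set Y := [set x in nbhd e s | e u' x].
have sub : X :|: Y \subset nbhd e s :\ u :\ u'.
  apply/subsetP => x; rewrite !inE => /orP [] /andP [xN exx].
    rewrite xN andbT; apply/andP; split.
      by apply: contraNneq neuu' => <-.
    by apply: contraTneq exx => ->; rewrite irr.
  rewrite xN andbT; apply/andP; split.
    by apply: contraTneq exx => ->; rewrite irr.
  by apply: contraNneq neuu' => <-; rewrite sym.
have c1 := subset_leq_card sub.
have c2 := cardsUI X Y.
have c3 := cardsD1 u (nbhd e s); rewrite uN in c3.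
have c4 := cardsD1 u' (nbhd e s :\ u); rewrite !inE eq_sym uu' /= in c4.
rewrite inE in u'N; rewrite u'N in c4.
have c5 := cardsD1 s S; rewrite sS in c5.
have [c /andP [cXY cS]] : exists c, (c \in X :&: Y) && (c \notin S :\ s).
  apply: pick_avoid; rewrite /deg /deg_in -/X -/Y in Ho; lia.
move: cXY; rewrite !inE => /andP [/andP [esc euc] /andP [_ eu'c]].
have cS' : c \notin S.
  move: cS; rewrite !inE negb_and negbK => /orP [/eqP ?|//]; subst c.
  by move: esc; rewrite irr.
apply: connect_trans (edge _ _ euc uS cS') _.
by apply: edge => //; rewrite sym.
Qed.

Lemma L2 (T : finType) (e : rel T) (S : {set T}) s t :
  simple_graph e -> connected e -> 4 <= #|T| -> locally_ore e ->
  #|S| < 3 -> s \in S -> t \in S -> e s t ->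
  exists c, [&& e s c, e t c & c \notin S].
Proof.
move=> G conn n4 ore S3 sS tS est.
have [sym irr] := G.
have [x /andP [esx xt]] := deg2 G conn n4 ore est.
have Ssub : forall z, z \in S -> (z == s) || (z == t).
  move=> z zS; apply/negPn/negP => /norP [zs zt].
  have : z |: [set s; t] \subset S.
    by apply/subsetP => y; rewrite !inE => /or3P [] /eqP ->.
  move/subset_leq_card; rewrite cardsU1 cards2 !inE negb_or zs zt.
  have st : s != t by apply: contraTneq est => ->; rewrite irr.
  by rewrite st /=; lia.
suff [c /andP [esc etc]] : exists c, e s c && e t c.
  exists c; rewrite esc etc /=; apply/negP => /Ssub /orP [] /eqP cE.
    by move: esc; rewrite cE irr.
  by move: etc; rewrite cE irr.
case: (boolP (e t x)) => [etx|netx]; first by exists x; rewrite esx etx.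
have tN : t \in nbhd e s by rewrite inE.
have xN : x \in nbhd e s by rewrite inE.
have tx : t != x by rewrite eq_sym.
have Ho := ore s t x tN xN tx netx.
have nx : ~~ e x t by rewrite sym.
have H1 := deg_in_le irr xN tN xt nx.
have : 0 < deg_in e (nbhd e s) t by rewrite /deg in Ho; lia.
rewrite /deg_in card_gt0 => /set0Pn [y]; rewrite !inE => /andP [esy ety].
by exists y; rewrite esy ety.
Qed.

Theorem mainTheorem4 (T : finType) (e : rel T) :
  simple_graph e -> connected e -> 4 <= #|T| -> locally_ore e ->
  k_connected 3 e.
Proof.
move=> G conn n4 ore; split; first by lia.
move=> S S3 x y; rewrite !inE => xS yS.
have [sym irr] := G.
set R := [rel a b | [&& e a b, a \in ~: S & b \in ~: S]].
pose P := fun v => if v \in S then [forall u, (e v u && (u \notin S)) ==> connect R x u]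
                   else connect R x v.
have : P y.
  apply: (connect_pred (P := P) _ _ (conn x y (in_setT _) (in_setT _))).
    by rewrite /P (negbTE xS) connect0.
  move=> a b /= /andP [eab _]; rewrite /P.
  case: (boolP (a \in S)) => aS; case: (boolP (b \in S)) => bS.
  - move=> /forallP Ha; apply/forallP => u; apply/implyP => /andP [ebu uS].
    have [c /and3P [eac ebc cS]] := L2 G conn n4 ore S3 aS bS eab.
    move: (Ha c); rewrite eac cS /= => Hc.
    apply: connect_trans Hc _; exact: L1 G ore S3 bS ebc ebu cS uS.
  - by move=> /forallP /(_ b); rewrite eab bS.
  - move=> Ha; apply/forallP => u; apply/implyP => /andP [ebu uS].
    apply: connect_trans Ha _; apply: L1 G ore S3 bS _ ebu aS uS.
    by rewrite sym.
  - move=> Ha; apply: connect_trans Ha _; apply: connect1.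
    by rewrite /= !inE eab aS bS.
by rewrite /P (negbTE yS).
Qed.
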